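(* If some set maximizing $\widehat{sw}$ over nonempty subsets of $\mathbb{S}$ has cardinality $k$, then $\{1,2,\dots,k\}$ also maximizes $\widehat{sw}$ over nonempty subsets of $\mathbb{S}$.
   Context: Sellers $\mathbb{S}=\{1,\dots,n\}$ with product qualities $\theta_1\ge\theta_2\ge\dots\ge\theta_n\ge0$. Let $W$ be the Lambert W function on $[0,\infty)$ ($W(x)e^{W(x)}=x$) and $w_i=W(e^{\theta_i-1})$, so $w_1\ge\dots\ge w_n>0$. For nonempty $S\subseteq\mathbb{S}$, the Cournot-equilibrium social welfare when $S$ is displayed is $\widehat{sw}(S)=\log(1+\sum_{i\in S}w_i)+\frac{\sum_{i\in S}(w_i^2+w_i)}{1+\sum_{i\in S}w_i}$. *)

(* Defs.v *)
From Stdlib Require Import Reals List Arith ClassicalEpsilon.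
Open Scope R_scope.

(* Lambert W on [0,oo): the unique y >= 0 with y * e^y = x (exists and is
   unique for x >= 0; chosen by Hilbert epsilon). *)
Definition LambertW (x : R) : R :=
  epsilon (inhabits 0%R) (fun y => 0 <= y /\ y * exp y = x).

Definition wq (theta : nat -> R) (i : nat) : R := LambertW (exp (theta i - 1)).

(* Subsets of {1,...,n} are boolean predicates on nat, restricted to 1..n. *)
Definition members (n : nat) (S : nat -> bool) : list nat :=
  filter S (seq 1 n).

Definition sumS (n : nat) (S : nat -> bool) (f : nat -> R) : R :=
  fold_right Rplus 0 (map f (members n S)).

Definition card (n : nat) (S : nat -> bool) : nat := length (members n S).

Definition nonemptyS (n : nat) (S : nat -> bool) : Prop :=
  exists i, (1 <= i <= n)%nat /\ S i = true.

(* Cournot-equilibrium social welfare of displayed set S *)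
Definition sw_hat (theta : nat -> R) (n : nat) (S : nat -> bool) : R :=
  let W := sumS n S (wq theta) in
  ln (1 + W) + sumS n S (fun i => wq theta i ^ 2 + wq theta i) / (1 + W).

Definition is_maximizer (theta : nat -> R) (n : nat) (S : nat -> bool) : Prop :=
  nonemptyS n S /\
  forall T : nat -> bool, nonemptyS n T -> sw_hat theta n T <= sw_hat theta n S.

Definition prefix (k : nat) : nat -> bool := fun i => Nat.leb i k.

(* Main.v *)
Require Import Defs.
From Stdlib Require Import Reals List Arith.
From Stdlib Require Import Lra Lia Psatz ClassicalEpsilon Classical.
Open Scope R_scope.
Lemma lambert_ex c : 0 < c -> exists y, 0 <= y /\ y * exp y = c.
Proof.
  intro Hc.
  destruct (IVT (fun y => y * exp y - c) 0 c) as [z [Hz1 Hz2]].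
  - intro x. apply continuity_pt_minus. apply continuity_pt_mult. apply derivable_continuous_pt, derivable_pt_id.
    apply derivable_continuous_pt. apply derivable_pt_exp. apply derivable_continuous_pt, derivable_pt_const.
  - exact Hc.
  - rewrite exp_0. lra.
  - assert (1 < exp c) by (rewrite <- exp_0; apply exp_increasing; lra). nra.
  - exists z. split; lra.
Qed.
Lemma wq_spec theta i : 0 < wq theta i /\ wq theta i * exp (wq theta i) = exp (theta i - 1).
Proof.
  unfold wq, LambertW.
  destruct (epsilon_spec (inhabits 0) (fun y => 0 <= y /\ y * exp y = exp (theta i - 1)) (lambert_ex _ (exp_pos _))) as [H1 H2].
  split; auto. destruct H1 as [H1|H1]; auto. rewrite <- H1 in H2.
  pose proof (exp_pos (theta i - 1)). lra.
Qed.
Lemma wq_mono theta i j : theta j <= theta i -> wq theta j <= wq theta i.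
Proof.
  intro H. destruct (wq_spec theta i) as [Hi Ei]. destruct (wq_spec theta j) as [Hj Ej].
  destruct (Rle_lt_dec (wq theta j) (wq theta i)) as [h|h]; auto.
  exfalso. assert (H0 : exp (wq theta i) < exp (wq theta j)) by (apply exp_increasing; lra).
  assert (H1 : wq theta i * exp (wq theta i) < wq theta j * exp (wq theta j)).
  { apply Rle_lt_trans with (wq theta i * exp (wq theta j)). apply Rmult_le_compat_l; lra.
    apply Rmult_lt_compat_r; [apply exp_pos|lra]. }
  rewrite Ei, Ej in H1. apply exp_lt_inv in H1. lra.
Qed.

Definition lsum (l : list nat) (g : nat -> R) : R := fold_right Rplus 0 (map g l).
Definition ind (T : nat -> bool) (f : nat -> R) x := if T x then f x else 0.
Lemma filter_sum l T f : fold_right Rplus 0 (map f (filter T l)) = lsum l (ind T f).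
Proof. induction l; unfold lsum, ind in *; simpl; auto. destruct (T a); simpl; rewrite IHl; ring. Qed.
Lemma sumS_lsum n T f : sumS n T f = lsum (seq 1 n) (ind T f).
Proof. apply filter_sum. Qed.
Lemma card_lsum l T : INR (length (filter T l)) = lsum l (ind T (fun _ => 1)).
Proof. induction l as [|a l IHl]. reflexivity. unfold lsum, ind in *. cbn [filter map fold_right].
  destruct (T a); cbn [length]; [rewrite S_INR, IHl; ring | rewrite IHl; ring]. Qed.
Lemma lsum_ext l g1 g2 : (forall x, In x l -> g1 x = g2 x) -> lsum l g1 = lsum l g2.
Proof. induction l; unfold lsum in *; simpl; intros; auto. rewrite H, IHl; auto. Qed.
Lemma lsum_le l g1 g2 : (forall x, In x l -> g1 x <= g2 x) -> lsum l g1 <= lsum l g2.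
Proof. induction l; unfold lsum in *; simpl; intros; [lra|]. assert (g1 a <= g2 a) by auto.
  assert (fold_right Rplus 0 (map g1 l) <= fold_right Rplus 0 (map g2 l)) by auto. lra. Qed.
Lemma lsum_plus l g1 g2 : lsum l (fun x => g1 x + g2 x) = lsum l g1 + lsum l g2.
Proof. induction l; unfold lsum in *; simpl; [ring|]. rewrite IHl; ring. Qed.
Lemma lsum_app l1 l2 g : lsum (l1 ++ l2) g = lsum l1 g + lsum l2 g.
Proof. unfold lsum; rewrite map_app, fold_right_app. induction l1; simpl. ring.
  rewrite IHl1. ring. Qed.
Lemma lsum_zero l g : (forall x, In x l -> g x = 0) -> lsum l g = 0.
Proof. induction l; unfold lsum in *; simpl; intros; auto. rewrite H, IHl; auto. ring. Qed.
Lemma lsum_single l x0 c : NoDup l -> In x0 l -> lsum l (fun x => if x =? x0 then c else 0) = c.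
Proof.
  induction l as [|a l IH]; intros Hn Hi; [contradiction|]. unfold lsum in *; simpl in *.
  apply NoDup_cons_iff in Hn as [Ha Hn].
  destruct (Nat.eqb_spec a x0).
  - subst. change (fold_right Rplus 0 (map (fun x : nat => if x =? x0 then c else 0) l)) with (lsum l (fun x : nat => if x =? x0 then c else 0)). rewrite (lsum_zero l). ring. intros x Hx. destruct (Nat.eqb_spec x x0); auto. subst; contradiction.
  - destruct Hi; [contradiction|]. rewrite IH; auto. ring.
Qed.
Definition addS (x0 : nat) (T : nat -> bool) := fun y => if y =? x0 then true else T y.
Definition remS (x0 : nat) (T : nat -> bool) := fun y => if y =? x0 then false else T y.
Lemma lsum_add l T f x0 : NoDup l -> In x0 l -> T x0 = false ->
  lsum l (ind (addS x0 T) f) = lsum l (ind T f) + f x0.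
Proof.
  intros Hn Hi HT.
  rewrite <- (lsum_single l x0 (f x0)) by auto. rewrite <- lsum_plus.
  apply lsum_ext. intros x _. unfold ind, addS. destruct (Nat.eqb_spec x x0).
  - subst. rewrite HT. ring.
  - ring.
Qed.
Lemma sumS_add n T f x0 : (1 <= x0 <= n)%nat -> T x0 = false ->
  sumS n (addS x0 T) f = sumS n T f + f x0.
Proof. intros. rewrite !sumS_lsum. apply lsum_add; auto. apply seq_NoDup. apply in_seq; lia. Qed.
Lemma members_ext n T1 T2 : (forall x, (1 <= x <= n)%nat -> T1 x = T2 x) -> members n T1 = members n T2.
Proof. intros. apply filter_ext_in. intros a Ha. apply in_seq in Ha. apply H; lia. Qed.
Lemma count_prefix n k : lsum (seq 1 n) (fun x => if x <=? k then 1 else 0) = INR (Nat.min n k).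
Proof.
  induction n. reflexivity.
  rewrite seq_S, lsum_app, IHn. unfold lsum; cbn [map fold_right].
  destruct (Nat.leb_spec (1 + n) k).
  - replace (Nat.min n k) with n by lia. replace (Nat.min (S n) k) with (S n) by lia.
    rewrite S_INR; ring.
  - replace (Nat.min n k) with k by lia. replace (Nat.min (S n) k) with k by lia. ring.
Qed.
Definition h (D u : R) := ln u + u + D / u.
Lemma h_deriv D c : 0 < c -> derivable_pt_lim (h D) c ((c^2 + c - D) / c^2).
Proof.
  intro Hc.
  assert (H := derivable_pt_lim_plus _ _ c _ _ (derivable_pt_lim_plus _ _ c _ _ (derivable_pt_lim_ln c Hc) (derivable_pt_lim_id c))
     (derivable_pt_lim_div (fct_cte D) id c _ _ (derivable_pt_lim_const D c) (derivable_pt_lim_id c) ltac:(unfold id; lra))).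
  unfold h.
  replace ((c^2 + c - D) / c^2) with (/ c + 1 + (0 * id c - 1 * fct_cte D c) / (id c)²).
  exact H. unfold id, fct_cte, Rsqr. field. lra.
Qed.
Lemma hlemma D A u1 u2 : 0 < A -> A < u1 -> u1 <= u2 -> h D A <= h D u1 -> h D u1 <= h D u2.
Proof.
  intros HA H1 H2 H3.
  destruct (Rle_lt_dec (h D u1) (h D u2)) as [|Hlt]; auto. exfalso.
  destruct H2 as [H2|H2]; [|subst; lra].
  destruct (MVT_cor2 (h D) (fun c => (c^2 + c - D) / c^2) u1 u2 H2) as [c [Hc1 Hc2]].
  { intros c Hc. apply h_deriv. lra. }
  destruct (MVT_cor2 (h D) (fun c => (c^2 + c - D) / c^2) A u1 H1) as [c' [Hc1' Hc2']].
  { intros c0 Hc. apply h_deriv. lra. }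
  cbv beta in Hc1, Hc1'.
  set (q := (c^2 + c - D) / c^2) in *.
  set (q' := (c'^2 + c' - D) / c'^2) in *.
  assert (Eq : q * c^2 = c^2 + c - D) by (unfold q; field; lra).
  assert (Eq' : q' * c'^2 = c'^2 + c' - D) by (unfold q'; field; lra).
  assert (q * (u2 - u1) < 0) by lra.
  assert (q < 0). { destruct (Rlt_le_dec q 0); auto. assert (0 <= q * (u2-u1)) by (apply Rmult_le_pos; lra). lra. }
  assert (0 < c^2) by nra.
  assert (c^2 + c - D < 0) by nra.
  assert (c'^2 + c' < c^2 + c) by nra.
  assert (0 < c'^2) by nra.
  assert (q' < 0) by nra.
  assert (q' * (u1 - A) < 0). { assert (0 < (-q') * (u1 - A)) by (apply Rmult_lt_0_compat; lra). lra. }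
  lra.
Qed.
Definition G Wp C x := ln (1 + (Wp + x)) + (C + (x^2 + x)) / (1 + (Wp + x)).
Lemma G_h Wp C x : 0 <= Wp -> 0 <= x ->
  G Wp C x = h (C + (1+Wp)^2 - (1+Wp)) (1 + Wp + x) + 1 - 2 * (1 + Wp).
Proof.
  intros. unfold G, h. replace (1 + (Wp + x)) with (1 + Wp + x) by ring.
  assert ((C + (x ^ 2 + x)) / (1 + Wp + x) = x - Wp + (C + (1 + Wp) ^ 2 - (1 + Wp)) / (1 + Wp + x)) by (field; lra).
  lra.
Qed.
Lemma key Wp C a b : 0 <= Wp -> 0 < a -> a <= b -> G Wp C 0 <= G Wp C a -> G Wp C a <= G Wp C b.
Proof.
  intros HW Ha Hab H.
  rewrite !G_h in * by lra.
  replace (1 + Wp + 0) with (1 + Wp) in H by ring.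
  assert (h (C + (1 + Wp) ^ 2 - (1 + Wp)) (1 + Wp + a) <= h (C + (1 + Wp) ^ 2 - (1 + Wp)) (1 + Wp + b)).
  { apply hlemma with (1 + Wp); lra. }
  lra.
Qed.

Lemma lsum_nonneg l g : (forall x, In x l -> 0 <= g x) -> 0 <= lsum l g.
Proof. intros. rewrite <- (lsum_zero l (fun _ => 0)) by auto. apply lsum_le; auto. Qed.
Lemma sumS_ext n T1 T2 f : (forall x, (1 <= x <= n)%nat -> T1 x = T2 x) -> sumS n T1 f = sumS n T2 f.
Proof. intros. unfold sumS. rewrite (members_ext n T1 T2); auto. Qed.
Lemma sw_ext theta n T1 T2 : (forall x, (1 <= x <= n)%nat -> T1 x = T2 x) -> sw_hat theta n T1 = sw_hat theta n T2.
Proof. intros. unfold sw_hat. rewrite !(sumS_ext n T1 T2); auto. Qed.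
Lemma max_ext theta n T1 T2 : (forall x, (1 <= x <= n)%nat -> T1 x = T2 x) -> is_maximizer theta n T1 -> is_maximizer theta n T2.
Proof.
  intros H [[j [Hj Tj]] HM]. split.
  - exists j. rewrite <- H; auto.
  - intros U HU. rewrite <- (sw_ext theta n T1 T2); auto.
Qed.
Lemma len_add l P x0 : NoDup l -> In x0 l -> P x0 = false -> length (filter (addS x0 P) l) = S (length (filter P l)).
Proof. intros. apply INR_eq. rewrite S_INR, !card_lsum, lsum_add; auto. Qed.

Lemma wpos theta n T : 0 <= sumS n T (wq theta).
Proof. rewrite sumS_lsum. apply lsum_nonneg. intros x _. unfold ind. destruct (T x); [|lra].
  destruct (wq_spec theta x); lra. Qed.

Lemma swap_max theta n T i j :
  (forall i j, (1 <= i)%nat -> (i <= j)%nat -> (j <= n)%nat -> theta j <= theta i) ->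
  is_maximizer theta n T -> (1 <= i)%nat -> (i < j)%nat -> (j <= n)%nat -> T i = false -> T j = true ->
  is_maximizer theta n (addS i (remS j T)).
Proof.
  intros Hsorted HT Hi Hij Hj Ti Tj.
  set (Sm := remS j T).
  assert (Smj : Sm j = false) by (unfold Sm, remS; rewrite Nat.eqb_refl; auto).
  assert (Smi : Sm i = false) by (unfold Sm, remS; destruct (Nat.eqb_spec i j); [lia|auto]).
  assert (ET : forall x, (1 <= x <= n)%nat -> T x = addS j Sm x).
  { intros x _. unfold addS, Sm, remS. destruct (Nat.eqb_spec x j); subst; auto. }
  set (Wp := sumS n Sm (wq theta)).
  set (C := sumS n Sm (fun i => wq theta i ^ 2 + wq theta i)).
  assert (E1 : sw_hat theta n T = G Wp C (wq theta j)).
  { rewrite (sw_ext theta n T (addS j Sm)) by auto. unfold sw_hat.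
    rewrite !sumS_add by (auto; lia). reflexivity. }
  assert (E2 : sw_hat theta n (addS i Sm) = G Wp C (wq theta i)).
  { unfold sw_hat. rewrite !sumS_add by (auto; lia). reflexivity. }
  assert (HW : 0 <= Wp) by apply wpos.
  destruct (wq_spec theta j) as [wj _].
  assert (wji : wq theta j <= wq theta i) by (apply wq_mono, Hsorted; lia).
  assert (H0 : G Wp C 0 <= G Wp C (wq theta j)).
  { destruct (classic (nonemptyS n Sm)) as [Hne|Hne].
    - rewrite <- E1. replace (G Wp C 0) with (sw_hat theta n Sm). apply HT; auto.
      unfold G, sw_hat. fold Wp C. f_equal. f_equal. ring. f_equal; ring.
    - assert (Z : forall f, sumS n Sm f = 0).
      { intro f. rewrite sumS_lsum. apply lsum_zero. intros x Hx. apply in_seq in Hx.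
        unfold ind. destruct (Sm x) eqn:E; auto. exfalso. apply Hne. exists x. split; auto; lia. }
      unfold G. fold Wp C. unfold Wp, C. rewrite !Z.
      replace (1 + (0 + 0)) with 1 by ring. rewrite ln_1.
      replace ((0 + (0 ^ 2 + 0)) / 1) with 0 by field.
      set (a := wq theta j) in *.
      assert (Hl : ln 1 < ln (1 + (0 + a))) by (apply ln_increasing; lra). rewrite ln_1 in Hl.
      assert (0 <= (0 + (a ^ 2 + a)) / (1 + (0 + a))).
      { apply Rmult_le_pos; [nra| left; apply Rinv_0_lt_compat; lra]. }
      lra. }
  assert (Hk := key Wp C (wq theta j) (wq theta i) HW wj wji H0).
  split.
  - exists i. split; [lia|]. unfold addS. rewrite Nat.eqb_refl. auto.
  - intros U HU. destruct HT as [_ HT]. specialize (HT U HU). fold Sm. lra.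
Qed.

Definition mc k n (T : nat -> bool) := length (filter (fun x => (T x && (k <? x)%nat)%bool) (seq 1 n)).

Lemma swap_card n T i j : (1 <= i)%nat -> (i < j)%nat -> (j <= n)%nat -> T i = false -> T j = true ->
  card n (addS i (remS j T)) = card n T.
Proof.
  intros Hi Hij Hj Ti Tj. unfold card, members.
  rewrite len_add; [| apply seq_NoDup | apply in_seq; lia | unfold remS; destruct (Nat.eqb_spec i j); [lia|auto]].
  rewrite (filter_ext_in T (addS j (remS j T))).
  rewrite len_add; [reflexivity | apply seq_NoDup | apply in_seq; lia | unfold remS; rewrite Nat.eqb_refl; auto].
  intros x _. unfold addS, remS. destruct (Nat.eqb_spec x j); subst; auto.
Qed.

Lemma swap_mc k n T i j : (1 <= i)%nat -> (i <= k)%nat -> (k < j)%nat -> (j <= n)%nat -> T i = false -> T j = true ->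
  mc k n T = S (mc k n (addS i (remS j T))).
Proof.
  intros Hi Hik Hkj Hj Ti Tj. unfold mc.
  set (P := fun x => (remS j T x && (k <? x)%nat)%bool).
  rewrite (filter_ext_in (fun x => (addS i (remS j T) x && (k <? x)%nat)%bool) P).
  2:{ intros x _. unfold P, addS. destruct (Nat.eqb_spec x i); auto. subst x.
      assert (Hki : (k <? i)%nat = false) by (apply Nat.ltb_ge; lia). rewrite Hki.
      unfold remS. destruct (Nat.eqb_spec i j); [lia|]. rewrite Ti. auto. }
  rewrite (filter_ext_in (fun x => (T x && (k <? x)%nat)%bool) (addS j P)).
  2:{ intros x _. unfold P, addS, remS. destruct (Nat.eqb_spec x j); subst; auto.
      rewrite Tj. simpl. apply Nat.ltb_lt. lia. }
  apply len_add. apply seq_NoDup. apply in_seq; lia. unfold P, remS. rewrite Nat.eqb_refl. auto.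
Qed.

Lemma pigeon n T k j : card n T = k -> (1 <= j <= n)%nat -> T j = true -> (k < j)%nat ->
  exists i, (1 <= i <= k)%nat /\ T i = false.
Proof.
  intros Hc Hj Tj Hkj. apply NNPP. intro Hno.
  assert (Hall : forall i, (1 <= i <= k)%nat -> T i = true).
  { intros i Hi. destruct (T i) eqn:E; auto. exfalso. apply Hno. eauto. }
  assert (HI := card_lsum (seq 1 n) T). fold (members n T) in HI. fold (card n T) in HI.
  assert (Hle : lsum (seq 1 n) (fun x => (if x <=? k then 1 else 0) + (if x =? j then 1 else 0))
            <= lsum (seq 1 n) (ind T (fun _ => 1))).
  { apply lsum_le. intros x Hx. apply in_seq in Hx. unfold ind.
    destruct (Nat.leb_spec x k), (Nat.eqb_spec x j).
    - lia.
    - rewrite Hall by lia. lra.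
    - subst. rewrite Tj. lra.
    - destruct (T x); lra. }
  rewrite lsum_plus, count_prefix, lsum_single in Hle; [| apply seq_NoDup | apply in_seq; lia].
  replace (Nat.min n k) with k in Hle by lia. rewrite <- HI, Hc in Hle. lra.
Qed.

Lemma final n T k : mc k n T = 0%nat -> card n T = k -> forall x, (1 <= x <= n)%nat -> T x = prefix k x.
Proof.
  intros Hm Hc.
  assert (Hin : forall x, (1 <= x <= n)%nat -> T x = true -> (x <= k)%nat).
  { intros x Hx Tx. destruct (Nat.leb_spec x k); auto. exfalso.
    unfold mc in Hm. apply length_zero_iff_nil in Hm.
    assert (In x (filter (fun x => (T x && (k <? x)%nat)%bool) (seq 1 n))).
    { apply filter_In. split. apply in_seq; lia. rewrite Tx. simpl. apply Nat.ltb_lt; lia. }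
    rewrite Hm in H0. contradiction. }
  intros x Hx. apply NNPP. intro Hne. unfold prefix in Hne.
  assert (Tx : T x = false /\ (x <= k)%nat).
  { destruct (T x) eqn:E. - exfalso. apply Hne. symmetry. apply Nat.leb_le. auto.
    - split; auto. destruct (Nat.leb_spec x k); auto; exfalso; auto. }
  destruct Tx as [Tx Hxk].
  assert (HI := card_lsum (seq 1 n) T). fold (members n T) in HI. fold (card n T) in HI.
  assert (Hle : lsum (seq 1 n) (fun y => ind T (fun _ => 1) y + (if y =? x then 1 else 0))
            <= lsum (seq 1 n) (fun y => if y <=? k then 1 else 0)).
  { apply lsum_le. intros y Hy. apply in_seq in Hy. unfold ind.
    destruct (Nat.eqb_spec y x).
    - subst y. rewrite Tx. destruct (Nat.leb_spec x k); [lra|lia].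
    - destruct (T y) eqn:E.
      + assert (y <= k)%nat by (apply Hin; auto; lia). destruct (Nat.leb_spec y k); [lra|lia].
      + destruct (y <=? k); lra. }
  rewrite lsum_plus, count_prefix, lsum_single in Hle; [| apply seq_NoDup | apply in_seq; lia].
  rewrite <- HI, Hc in Hle.
  assert (INR (Nat.min n k) <= INR k) by (apply le_INR; lia). lra.
Qed.

Lemma main_ind theta n k :
  (forall i j, (1 <= i)%nat -> (i <= j)%nat -> (j <= n)%nat -> theta j <= theta i) ->
  forall N T, (mc k n T <= N)%nat -> is_maximizer theta n T -> card n T = k -> is_maximizer theta n (prefix k).
Proof.
  intros Hsorted N. induction N as [|N IH]; intros T HN HT Hc.
  - apply (max_ext theta n T); auto. apply final; auto. lia.
  - destruct (mc k n T) as [|m] eqn:Em.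
    + apply (max_ext theta n T); auto. apply final; auto.
    + unfold mc in Em. destruct (filter (fun x => (T x && (k <? x)%nat)%bool) (seq 1 n)) as [|j rest] eqn:Ef; [discriminate|].
      assert (Hjin : In j (filter (fun x => (T x && (k <? x)%nat)%bool) (seq 1 n))) by (rewrite Ef; left; auto).
      apply filter_In in Hjin as [Hj Hjb]. apply in_seq in Hj.
      apply andb_prop in Hjb as [Tj Hkj]. apply Nat.ltb_lt in Hkj.
      destruct (pigeon n T k j Hc ltac:(lia) Tj Hkj) as [i [Hi Ti]].
      apply (IH (addS i (remS j T))).
      * assert (Hm := swap_mc k n T i j ltac:(lia) ltac:(lia) Hkj ltac:(lia) Ti Tj).
        unfold mc in Hm. rewrite Ef in Hm. simpl in Hm. simpl in Em. unfold mc. lia.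
      * apply swap_max; auto; lia.
      * rewrite swap_card; auto; lia.
Qed.

Theorem lemma7 (n : nat) (theta : nat -> R)
  (Hsorted : forall i j, (1 <= i)%nat -> (i <= j)%nat -> (j <= n)%nat -> theta j <= theta i)
  (Hnonneg : forall i, (1 <= i <= n)%nat -> 0 <= theta i)
  (S : nat -> bool) (k : nat)
  (HS : is_maximizer theta n S) (Hk : card n S = k) :
  is_maximizer theta n (prefix k).
Proof.
  apply (main_ind theta n k Hsorted (mc k n S) S); auto.
Qed.
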